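(* Assume $\sigma_1\equiv0$. Fix $(t,x,y)$ and suppose $u\mapsto\Psi_{t,x,y}(u):=m(t,y,u)+\frac{\mu(t,y)^2-\sigma(t,y,u)^2\sigma_2(t,y)^2A(x)^2}{2\sigma_2(t,y)^2A(x)}$ is strictly concave on $[0,I]$. Then the optimal reinsurance strategy (the maximiser of $\Psi_{t,x,y}$ over $[0,I]$) is $$u^*(t,x,y)=\begin{cases}0,&(t,x,y)\in A_0,\\ \hat u(t,x,y),&(t,x,y)\in[0,T]\times\mathbb R^2\setminus(A_0\cup A_I),\\ I,&(t,x,y)\in A_I,\end{cases}$$ where $A_0=\{(t,x,y): \frac{\partial m}{\partial u}(t,y,0)\le A(x)\sigma(t,y,0)\frac{\partial\sigma}{\partial u}(t,y,0)\}$, $A_I=\{(t,x,y): \frac{\partial m}{\partial u}(t,y,I)\ge A(x)\sigma(t,y,I)\frac{\partial\sigma}{\partial u}(t,y,I)\}$, and $\hat u(t,x,y)$ is the unique solution $u$ of $\frac{\partial m}{\partial u}(t,y,u)=A(x)\sigma(t,y,u)\frac{\partial\sigma}{\partial u}(t,y,u)$.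
   Context: $I\in(0,\infty]$; $m(t,y,u)$ and $\sigma(t,y,u)$, $u\in[0,I]$, are continuously differentiable drift and volatility of the insurer's surplus under retention level $u$; $\mu(t,y),\sigma_2(t,y)>0$ are the drift and the (independent) volatility of the risky asset, and the risky asset's loading $\sigma_1$ on the insurance Brownian motion is zero (conditionally independent markets). The insurer's surplus with investment $a_t$ is $dX_t=\{m(t,Y_t,u_t)+a_t\mu(t,Y_t)\}dt+\sigma(t,Y_t,u_t)dW^1_t+a_t\sigma_2(t,Y_t)dW^2_t$, and $\Psi_{t,x,y}$ is the function to be maximised in the HJB equation under the ansatz $V(t,x,y)=U(x)\tilde V(t,y)$. $U$ is a SAHARA utility: $A(x):=-U''(x)/U'(x)=\alpha/\sqrt{b^2+(x-d)^2}$, $\alpha>0$, $b>0$, $d\in\mathbb R$. *)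

(* Defs.v *)
From mathcomp Require Import all_boot all_order all_algebra.
From mathcomp Require Import all_classical all_reals all_analysis.
Set Implicit Arguments. Unset Strict Implicit. Unset Printing Implicit Defensive.
Import Order.TTheory GRing.Theory Num.Theory numFieldNormedType.Exports.
Local Open Scope ring_scope.

Definition sahara_A {R : realType} (alpha b d x : R) : R :=
  alpha / Num.sqrt (b ^+ 2 + (x - d) ^+ 2).

Definition in_ret {R : realType} (I : \bar R) (u : R) : Prop :=
  0 <= u /\ (u%:E <= I)%E.

Definition Psi {R : realType} (m sig : R -> R -> R -> R) (mu sig2 : R -> R -> R)
  (Ax t y u : R) : R :=
  m t y u + (mu t y ^+ 2 - sig t y u ^+ 2 * sig2 t y ^+ 2 * Ax ^+ 2)
            / (2 * sig2 t y ^+ 2 * Ax).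

Definition strictly_concave_on {R : realType} (D : R -> Prop) (f : R -> R) : Prop :=
  forall a c lam : R, D a -> D c -> a != c -> 0 < lam < 1 ->
    lam * f a + (1 - lam) * f c < f (lam * a + (1 - lam) * c).

Definition is_maximiser {R : realType} (D : R -> Prop) (f : R -> R) (v : R) : Prop :=
  D v /\ forall u, D u -> f u <= f v.

(* Main.v *)
Require Import Defs.
From mathcomp Require Import all_boot all_order all_algebra.
From mathcomp Require Import all_classical all_reals all_analysis.
Import Order.TTheory GRing.Theory Num.Theory numFieldNormedType.Exports.
Local Open Scope ring_scope.
Local Open Scope classical_set_scope.
Set Implicit Arguments. Unset Strict Implicit.
Local Open Scope classical_set_scope.
From mathcomp Require Import ring lra.

Lemma in_ret_mid (R : realType) (I : \bar R) a c :
  in_ret I a -> in_ret I c -> in_ret I ((a + c) / 2).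
Proof.
move=> [a0 aI] [c0 cI]; split; first lra.
case: I aI cI => [r| |] //=.
- rewrite !lee_fin => aI cI; lra.
- by move=> *; exact: leey.
Qed.

Lemma Dv_eq (R : realType) (g : R -> R) a v : derivable g a 1 ->
  'D_v g a = v * derive1 g a.
Proof.
move=> /derivable1_diffP dg.
rewrite derive1E' // deriveE //.
by rewrite -[in LHS](mulr1 v) -[v * 1]/(v *: (1:R)) linearZ.
Qed.

Lemma L1 (R : realType) (g : R -> R) a v (K : R) : derivable g a v ->
  (forall l, 0 < l < 1 -> l * K <= g (l * v + a) - g a) -> K <= 'D_v g a.
Proof.
move=> dG H.
have cv := cvg_dnbhs_at_right dG.
suff : [set x | K <= x] (derive g a v) by [].
have := closed_cvg _ (@closed_ge _ K) _ _ cv; apply; first (try exact _); first (try exact: (@at_right_proper_filter R 0)).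
near=> h.
have h0 : 0 < h by near: h; exact: nbhs_right_gt.
have h1 : h < 1 by near: h; exact: nbhs_right_lt.
rewrite /= -[h *: v]/(h * v) -[_ *: (_ - _)]/(_ * _).
have := H h; rewrite h0 h1 => /(_ isT) hh.
by rewrite -(ler_pM2l h0) mulrA mulfV ?gt_eqF // mul1r.
Unshelve. all: by end_near.
Qed.

Lemma W (R : realType) (I : \bar R) (g : R -> R) a c :
  (forall u, derivable g u 1) -> strictly_concave_on (in_ret I) g ->
  in_ret I a -> in_ret I c -> a != c -> g c - g a <= derive1 g a * (c - a).
Proof.
move=> dg cc ha hc ac.
rewrite mulrC -Dv_eq //.
apply: L1.
  by apply: diff_derivable; apply/derivable1_diffP.
move=> l /andP[l0 l1].
have := cc c a l hc ha; rewrite eq_sym ac l0 l1 => /(_ isT isT) /ltW.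
have -> : l * c + (1 - l) * a = l * (c - a) + a by ring.
lra.
Qed.

Lemma Tstrict (R : realType) (I : \bar R) (g : R -> R) a c :
  (forall u, derivable g u 1) -> strictly_concave_on (in_ret I) g ->
  in_ret I a -> in_ret I c -> a != c -> g c - g a < derive1 g a * (c - a).
Proof.
move=> dg cc ha hc ac.
have hm := in_ret_mid ha hc.
have ma : a != (a + c) / 2.
  apply/negP => /eqP h; move/negP: ac; apply; apply/eqP; lra.
have := W dg cc ha hm ma.
have h1 : (0:R) < 1/2 by lra.
have h2 : (1/2:R) < 1 by lra.
have := cc a c (1/2) ha hc ac; rewrite h1 h2 => /(_ isT).
have -> : 1 / 2 * a + (1 - 1 / 2) * c = (a + c) / 2 by field.
have -> : (a + c) / 2 - a = (c - a) / 2 by field.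
set d := derive1 g a.
have -> : d * ((c - a) / 2) = (d * (c - a)) / 2 by rewrite mulrA.
lra.
Qed.

Lemma L2 (R : realType) (f : R -> R) v w : continuous f -> v < w ->
  (forall u, v < u < w -> f u < 0) -> f v <= 0.
Proof.
move=> cf vw H.
have cv := cvg_at_right_filter (cf v).
suff : [set x | x <= 0] (f v) by [].
have := closed_cvg _ (@closed_le _ 0) _ _ cv; apply; first (try exact _); first (try exact: (@at_right_proper_filter R v)).
near=> h.
have h0 : v < h by near: h; exact: nbhs_right_gt.
have h1 : h < w by near: h; exact: nbhs_right_lt.
by apply/ltW/H; rewrite h0 h1.
Unshelve. all: by end_near.
Qed.

Lemma L3 (R : realType) (f : R -> R) v w : continuous f -> w < v ->
  (forall u, w < u < v -> 0 < f u) -> 0 <= f v.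
Proof.
move=> cf vw H.
have cv := cvg_at_left_filter (cf v).
suff : [set x | 0 <= x] (f v) by [].
have := closed_cvg _ (@closed_ge _ 0) _ _ cv; apply; first (try exact _); first (try exact: (@at_left_proper_filter R v)).
near=> h.
have h0 : h < v by near: h; exact: nbhs_left_lt.
have h1 : w < h by near: h; exact: nbhs_left_gt.
by apply/ltW/H; rewrite h0 h1.
Unshelve. all: by end_near.
Qed.

Lemma dPsi (R : realType) (m sig : R -> R -> R -> R) (mu sig2 : R -> R -> R)
  (A t y : R) : 0 < A -> 0 < sig2 t y ->
  (forall u : R, derivable (m t y) u 1) -> (forall u : R, derivable (sig t y) u 1) ->
  forall u : R, is_derive u 1 (Psi m sig mu sig2 A t y)
     (derive1 (m t y) u - A * sig t y u * derive1 (sig t y) u).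
Proof.
move=> A0 s0 dm ds u.
set M := m t y; set S := sig t y.
have eP : Psi m sig mu sig2 A t y =
  M + (cst (mu t y ^+2 / (2 * sig2 t y ^+2 * A)) - (A / 2) \*: (S ^+ 2)).
  apply/funext => w /=; rewrite /Psi /M /S.
  rewrite !fctE /= -[(A / 2) *: _]/(_ * _).
  by field; rewrite !gt_eqF.
have dM : is_derive u 1 M (derive1 M u) by rewrite derive1E; apply: derivableP.
have dS : is_derive u 1 S (derive1 S u) by rewrite derive1E; apply: derivableP.
rewrite eP; apply: is_derive_eq.
rewrite -[_ *: _]/(_ * _) -[((2%:R * S u ^+ 1) *: _)]/(_ * _).
by rewrite expr1; field.
Qed.

Unset Implicit Arguments.
Local Close Scope classical_set_scope.

Theorem proposition5p6 (R : realType) (T : R) (I : \bar R)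
  (m sig : R -> R -> R -> R) (mu sig2 : R -> R -> R) (alpha b d : R)
  (t x y : R) :
  (0 < I)%E -> 0 < alpha -> 0 < b ->
  (forall t' y', forall u, derivable (m t' y') u 1) ->
  (forall t' y', continuous (derive1 (m t' y') : R -> R)) ->
  (forall t' y', forall u, derivable (sig t' y') u 1) ->
  (forall t' y', continuous (derive1 (sig t' y') : R -> R)) ->
  (forall t' y', 0 < sig2 t' y') ->
  0 <= t <= T ->
  strictly_concave_on (in_ret I)
    (Psi m sig mu sig2 (sahara_A alpha b d x) t y) ->
  let A := sahara_A alpha b d x in
  let foc := fun u => derive1 (m t y) u = A * sig t y u * derive1 (sig t y) u in
  let inA0 := derive1 (m t y) 0 <= A * sig t y 0 * derive1 (sig t y) 0 in
  let inAI := exists r : R, I = r%:E /\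
                A * sig t y r * derive1 (sig t y) r <= derive1 (m t y) r in
  (forall v, is_maximiser (in_ret I) (Psi m sig mu sig2 A t y) v <->
     [\/ inA0 /\ v = 0,
         inAI /\ v%:E = I
       | [/\ ~ inA0, ~ inAI, in_ret I v & foc v]])
  /\ (~ inA0 -> ~ inAI ->
        forall u1 u2, in_ret I u1 -> in_ret I u2 -> foc u1 -> foc u2 -> u1 = u2)
  /\ (I \is a fin_num -> ~ inA0 -> ~ inAI -> exists u, in_ret I u /\ foc u).
Proof.
move=> I0 a0 b0 dm cm ds cs s2p tT cc A foc inA0 inAI.
have A0 : 0 < A.
  rewrite /A /sahara_A divr_gt0 // sqrtr_gt0.
  have := exprn_gt0 2 b0; have := sqr_ge0 (x - d); lra.
set P := Psi m sig mu sig2 A t y.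
have dP := dPsi mu A0 (s2p t y) (dm t y) (ds t y).
have dPd : forall u : R, derivable P u 1 by move=> u; case: (dP u).
have eP : forall u : R, derive1 P u =
    derive1 (m t y) u - A * sig t y u * derive1 (sig t y) u.
  by move=> u; rewrite derive1E; exact: derive_val.
have cP : continuous (derive1 P).
  have -> : derive1 P = fun u => derive1 (m t y) u - A * sig t y u * derive1 (sig t y) u.
    by apply/funext => u; exact: eP.
  move=> u; apply: cvgB; first exact: cm.
  apply: cvgM; last exact: cs.
  apply: cvgM; first exact: cvg_cst.
  by apply: differentiable_continuous; apply/derivable1_diffP.
have hA0 : inA0 <-> derive1 P 0 <= 0 by rewrite /inA0 eP subr_le0.
have hAI : inAI <-> exists r, I = r%:E /\ 0 <= derive1 P r.
  by split => -[r [Ir hr]]; exists r; split => //; move: hr; rewrite eP subr_ge0.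
have hfoc : forall u, foc u <-> derive1 P u = 0.
  by move=> u; rewrite /foc eP; split => [->|/eqP]; [rewrite subrr|rewrite subr_eq0 => /eqP].
have Tp : forall a c, in_ret I a -> in_ret I c -> a != c ->
    P c - P a < derive1 P a * (c - a).
  by move=> a c ha hc ac; exact: (Tstrict dPd cc ha hc ac).
have r0 : in_ret I 0 by split => //; exact: ltW.
have hI : (exists r, I = r%:E) \/ I = +oo%E.
  by case: I I0 {cc Tp r0 hAI inAI} => [r||] // _; [left; exists r | right].
have rI : forall r, I = r%:E -> in_ret I r /\ 0 < r.
  move=> r Ir; rewrite Ir; move: I0; rewrite Ir lte_fin => r0'; do ! split => //; exact: ltW.
have uI : forall r u, I = r%:E -> in_ret I u -> u <= r.
  by move=> r u Ir [_]; rewrite Ir lee_fin.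

have uniq : forall u1 u2, in_ret I u1 -> in_ret I u2 ->
    derive1 P u1 = 0 -> derive1 P u2 = 0 -> u1 = u2.
  move=> u1 u2 h1 h2 f1 f2; apply/eqP/negPn/negP => n12.
  have := Tp _ _ h1 h2 n12; have := Tp _ _ h2 h1; rewrite eq_sym n12 => /(_ isT).
  rewrite f1 f2 !mul0r; lra.
split; last split.
- move=> v; split.
  + move=> [hv Hmax].
    have key : forall u, in_ret I u -> u != v -> 0 < derive1 P u * (v - u).
      move=> u hu uv; have := Tp _ _ hu hv uv; have := Hmax u hu; lra.
    case: (boolP (derive1 P 0 <= 0)) => h0.
      apply: Or31; split; first exact/hA0.
      apply/eqP/negPn/negP => v0.
      have := key 0 r0; rewrite eq_sym v0 => /(_ isT); case: hv => hv _; nra.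
    rewrite -ltNge in h0.
    case: (pselect (exists r, I = r%:E /\ 0 <= derive1 P r)) => hIr.
      apply: Or32; split; first exact/hAI.
      case: hIr => r [Ir hr]; rewrite Ir; congr (_%:E).
      have [rr _] := rI r Ir; have vr := uI r v Ir hv.
      apply/eqP/negPn/negP => v0.
      have := key r rr; rewrite eq_sym v0 => /(_ isT); nra.
    apply: Or33; split.
    * by move/hA0; rewrite leNgt h0.
    * by move/hAI.
    * exact: hv.
    * apply/hfoc/eqP; rewrite eq_le; apply/andP; split.
        case: hI => [[r Ir]|Iy].
          have vr := uI r v Ir hv.
          case: (eqVneq v r) => [vr'|vr'].
            rewrite vr' leNgt; apply/negP => hr; apply: hIr; exists r; split => //.
            exact: ltW.
          have vr2 : v < r by rewrite lt_neqAle vr' vr.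
          apply: (L2 cP vr2) => u /andP[vu ur].
          have hu : in_ret I u by split; [case: hv => ? _; lra | rewrite Ir lee_fin; exact: ltW].
          have := key u hu; rewrite gt_eqF // => /(_ isT); nra.
        have vr2 : v < v + 1 by lra.
        apply: (L2 cP vr2) => u /andP[vu ur].
        have hu : in_ret I u by split; [case: hv => ? _; lra | rewrite Iy; exact: leey].
        have := key u hu; rewrite gt_eqF // => /(_ isT); nra.
      case: (eqVneq v 0) => [->|v0]; first exact: ltW.
      have v0' : 0 < v by rewrite lt_neqAle eq_sym v0; case: hv.
      apply: (L3 cP v0') => u /andP[u0 uv].
      have hu : in_ret I u.
        split; first exact: ltW.
        case: hv => _ hv; apply: le_trans hv; rewrite lee_fin; exact: ltW.
      have := key u hu; rewrite lt_eqF // => /(_ isT); nra.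
  + case.
    * move=> [/hA0 h0 ->]; split => // u hu.
      case: (eqVneq u 0) => [->//|u0].
      have := Tp _ _ r0 hu; rewrite eq_sym u0 => /(_ isT).
      case: hu => hu _; nra.
    * move=> [/hAI [r [Ir hr]] hv].
      have -> : v = r by move: hv; rewrite Ir => -[].
      have [rr _] := rI r Ir; split => // u hu.
      have ur := uI r u Ir hu.
      case: (eqVneq u r) => [->//|u0].
      have := Tp _ _ rr hu; rewrite eq_sym u0 => /(_ isT); nra.
    * move=> [_ _ hv /hfoc hf]; split => // u hu.
      case: (eqVneq u v) => [->//|u0].
      have := Tp _ _ hv hu; rewrite eq_sym u0 hf mul0r => /(_ isT); lra.
- move=> n0 nI u1 u2 h1 h2 /hfoc f1 /hfoc f2; exact: uniq.
- move=> fI n0 nI.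
  have [r Ir] : exists r, I = r%:E.
    by case: I fI I0 {cc Tp r0 hAI inAI hI rI uI uniq n0 nI} => [r||] // _ _; exists r.
  have [rr r0'] := rI r Ir.
  have h0 : 0 < derive1 P 0 by rewrite ltNge; apply/negP => /hA0.
  have hr : derive1 P r < 0.
    by rewrite ltNge; apply/negP => hr; apply: nI; apply/hAI; exists r.
  have cw : {within `[0, r], continuous (derive1 P)}%classic by apply: continuous_subspaceT.
  have := @IVT R (derive1 P) 0 r 0 (ltW r0') cw; case => [|c cI Pc].
    by rewrite ge_min le_max (ltW hr) (ltW h0) orbT.
  exists c; split; last exact/hfoc.
  move: cI; rewrite in_itv /= => /andP[c0 cr]; split => //.
  by rewrite Ir lee_fin.
Qed.
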